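(* Let $\mathfrak g$ be a finite-dimensional complex simple Lie algebra, $\lambda\in P^+$, $i\in I$ and $w\in W$ such that $\lambda-w^{-1}\omega_i\in P^+$. Then $(\lambda,\lambda)$ is maximal in $P^+(2\lambda,2)/\!\sim$ and $(\lambda,\lambda-w^{-1}\omega_i)$ is maximal in $P^+(2\lambda-w^{-1}\omega_i,2)/\!\sim$; that is, if $\boldsymbol\mu\in P^+(2\lambda,2)$ with $(\lambda,\lambda)\preceq\boldsymbol\mu$ then $\boldsymbol\mu\sim(\lambda,\lambda)$, and if $\boldsymbol\mu\in P^+(2\lambda-w^{-1}\omega_i,2)$ with $(\lambda,\lambda-w^{-1}\omega_i)\preceq\boldsymbol\mu$ then $\boldsymbol\mu\sim(\lambda,\lambda-w^{-1}\omega_i)$.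
   Context: $\mathfrak g$ has simple roots indexed by $I$, fundamental weights $\omega_i$, positive roots $R^+$, coroots $h_\alpha$, Weyl group $W$, dominant integral weights $P^+$. For $\lambda\in P^+$, $P^+(\lambda,2)=\{(\lambda_1,\lambda_2)\in(P^+)^2:\lambda_1+\lambda_2=\lambda\}$; $(\lambda_1,\lambda_2)\preceq(\mu_1,\mu_2)$ means $\min\{\lambda_1(h_\alpha),\lambda_2(h_\alpha)\}\le\min\{\mu_1(h_\alpha),\mu_2(h_\alpha)\}$ for all $\alpha\in R^+$, and $\sim$ means equality of these minima for all $\alpha\in R^+$. *)

(* Defs.v *)
(* A finite-dimensional complex simple Lie algebra is encoded
   by its Cartan matrix: an indecomposable Cartan matrix of finite type
   (Kac's convention a_ij = alpha_j(h_i)), indexed by I = 'I_n. *)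
From HB Require Import structures.
From mathcomp Require Import all_boot all_order all_algebra.
Set Implicit Arguments. Unset Strict Implicit. Unset Printing Implicit Defensive.
Import Order.TTheory GRing.Theory Num.Theory.
Local Open Scope ring_scope.

Definition simple_finite_cartan (n : nat) (A : 'M[int]_n) : Prop :=
  (0 < n)%N /\
  (forall i, A i i = 2) /\
  (forall i j, i != j -> A i j <= 0) /\
  (forall i j, A i j = 0 -> A j i = 0) /\
  (* symmetrizable with positive definite symmetrization (finite type) *)
  (exists d : 'I_n -> int,
      (forall i, 0 < d i) /\
      (forall i j, d i * A i j = d j * A j i) /\
      (forall x : 'I_n -> rat, (exists i, x i != 0) ->
          0 < \sum_i \sum_j x i * (d i * A i j)%:~R * x j)) /\
  (forall J : {set 'I_n}, J != set0 -> J != setT ->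
      exists j, exists k, [/\ j \in J, k \notin J & A j k != 0]).

(* integral weights, given by their values lambda(h_i) on simple coroots *)
Definition weight (n : nat) := 'I_n -> int.
(* elements of the coroot lattice, by coordinates in the simple coroots h_i *)
Definition coroot (n : nat) := 'I_n -> int.

Definition pairing n (l : weight n) (h : coroot n) : int := \sum_i h i * l i.

Definition fund_weight n (i : 'I_n) : weight n := fun k => (k == i)%:Z.
Definition simple_coroot n (j : 'I_n) : coroot n := fun k => (k == j)%:Z.

(* s_j lambda = lambda - lambda(h_j) alpha_j, with alpha_j(h_k) = A k j *)
Definition sref_w n (A : 'M[int]_n) (j : 'I_n) (l : weight n) : weight n :=
  fun k => l k - l j * A k j.
(* s_j h = h - alpha_j(h) h_j *)
Definition sref_c n (A : 'M[int]_n) (j : 'I_n) (h : coroot n) : coroot n :=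
  fun k => h k - (k == j)%:Z * (\sum_i h i * A i j).

(* an element w of the Weyl group W is given by a word [:: j1; ...; jk],
   w = s_j1 ... s_jk *)
Definition weyl_act_w n (A : 'M[int]_n) (w : seq 'I_n) (l : weight n) : weight n :=
  foldr (sref_w A) l w.
Definition weyl_act_c n (A : 'M[int]_n) (w : seq 'I_n) (h : coroot n) : coroot n :=
  foldr (sref_c A) h w.
Definition weyl_inv_act_w n (A : 'M[int]_n) (w : seq 'I_n) (l : weight n) : weight n :=
  weyl_act_w A (rev w) l.

(* h_alpha for alpha in R^+: the positive (real) coroots *)
Definition is_pos_coroot n (A : 'M[int]_n) (h : coroot n) : Prop :=
  (exists (w : seq 'I_n) (j : 'I_n), forall k, h k = weyl_act_c A w (simple_coroot j) k)
  /\ (forall k, 0 <= h k).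

Definition dominant n (l : weight n) : Prop := forall k, 0 <= l k.

Definition in_P2 n (l l1 l2 : weight n) : Prop :=
  dominant l1 /\ dominant l2 /\ (forall k, l1 k + l2 k = l k).

Definition preceq n (A : 'M[int]_n) (l1 l2 m1 m2 : weight n) : Prop :=
  forall h, is_pos_coroot A h ->
    Num.min (pairing l1 h) (pairing l2 h) <= Num.min (pairing m1 h) (pairing m2 h).

Definition simeq n (A : 'M[int]_n) (l1 l2 m1 m2 : weight n) : Prop :=
  forall h, is_pos_coroot A h ->
    Num.min (pairing l1 h) (pairing l2 h) = Num.min (pairing m1 h) (pairing m2 h).

(* Main.v *)
Require Import Defs.
From HB Require Import structures.
From mathcomp Require Import all_boot all_order all_algebra.
From mathcomp Require Import zify ring.
From Stdlib Require Import FunctionalExtensionality.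
Import Order.TTheory GRing.Theory Num.Theory.
Local Open Scope ring_scope.


Lemma sum_delta n (m : 'I_n) (F : 'I_n -> int) : \sum_l (l == m)%:Z * F l = F m.
Proof.
rewrite (bigD1 m) //= eqxx mul1r big1 ?addr0 // => l /negbTE ->; by rewrite mul0r.
Qed.

Lemma pairing_simple n (l : weight n) j : pairing l (simple_coroot j) = l j.
Proof. by rewrite /pairing /simple_coroot sum_delta. Qed.

Lemma pairing_sum n (a b c : weight n) h : (forall k, a k + b k = c k) ->
  pairing a h + pairing b h = pairing c h.
Proof. move=> H; rewrite /pairing -big_split; apply: eq_bigr => k _; by rewrite -H mulrDr. Qed.

Lemma pairing_oppc n (l : weight n) (h : coroot n) :
  pairing l (fun k => - h k) = - pairing l h.
Proof. rewrite /pairing -sumrN; apply: eq_bigr => k _; by rewrite mulNr. Qed.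

Lemma pairing_ext n (l l' : weight n) h : (forall k, l k = l' k) -> pairing l h = pairing l' h.
Proof. move=> H; apply: eq_bigr => k _; by rewrite H. Qed.

Lemma pairing_extc n (l : weight n) h h' : (forall k, h k = h' k) -> pairing l h = pairing l h'.
Proof. move=> H; apply: eq_bigr => k _; by rewrite H. Qed.

Lemma sref_adj n (A : 'M[int]_n) j (l : weight n) (h : coroot n) :
  pairing (sref_w A j l) h = pairing l (sref_c A j h).
Proof.
rewrite /pairing /sref_w /sref_c.
under eq_bigr do rewrite mulrBr.
rewrite sumrB.
under [X in _ = X]eq_bigr do rewrite mulrBl.
rewrite sumrB; congr (_ - _).
rewrite [RHS](eq_bigr (fun k => (k == j)%:Z * ((\sum_i h i * A i j) * l k))); last first.
  by move=> k _; rewrite mulrA.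
rewrite sum_delta mulr_suml; apply: eq_bigr => k _; ring.
Qed.

Lemma weyl_adj n (A : 'M[int]_n) u (l : weight n) (h : coroot n) :
  pairing (weyl_act_w A u l) h = pairing l (weyl_act_c A (rev u) h).
Proof.
elim: u l h => [//|k u IH] l h.
rewrite /weyl_act_w /= sref_adj IH rev_cons /weyl_act_c foldr_rcons //.
Qed.

Lemma foldr_cancel (T I : Type) (f : I -> T -> T) : (forall j x, f j (f j x) = x) ->
  forall s x, foldr f (foldr f x s) (rev s) = x.
Proof.
move=> H; elim=> [//|a s IH] x.
by rewrite rev_cons foldr_rcons /= H IH.
Qed.

Lemma sref_w_inv n (A : 'M[int]_n) j (l : weight n) : A j j = 2 ->
  sref_w A j (sref_w A j l) = l.
Proof. move=> Hj; apply: functional_extensionality => k; rewrite /sref_w Hj; ring. Qed.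

Lemma sref_c_inv n (A : 'M[int]_n) j (h : coroot n) : A j j = 2 ->
  sref_c A j (sref_c A j h) = h.
Proof.
move=> Hj; apply: functional_extensionality => k; rewrite /sref_c.
set S := \sum_i h i * A i j.
have -> : \sum_i (h i - (i == j)%:Z * S) * A i j = - S.
  under eq_bigr do rewrite mulrBl -mulrA.
  by rewrite sumrB sum_delta Hj -/S; ring.
ring.
Qed.

Lemma sref_w_opp n (A : 'M[int]_n) j (l : weight n) :
  sref_w A j (fun k => - l k) = fun k => - sref_w A j l k.
Proof. apply: functional_extensionality => k; rewrite /sref_w; ring. Qed.

Lemma weyl_w_opp n (A : 'M[int]_n) u (l : weight n) :
  weyl_act_w A u (fun k => - l k) = fun k => - weyl_act_w A u l k.
Proof. elim: u => [//|a u IH]; by rewrite /weyl_act_w /= -/(weyl_act_w A u _) IH sref_w_opp. Qed.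

Lemma weyl_w_zero n (A : 'M[int]_n) u : weyl_act_w A u (fun _ => 0) = fun _ => 0.
Proof.
elim: u => [//|a u IH]; rewrite /weyl_act_w /= -/(weyl_act_w A u _) IH.
apply: functional_extensionality => k; rewrite /sref_w; ring.
Qed.

Lemma sref_c_opp n (A : 'M[int]_n) j (h : coroot n) :
  sref_c A j (fun k => - h k) = fun k => - sref_c A j h k.
Proof.
apply: functional_extensionality => k; rewrite /sref_c.
under eq_bigr do rewrite mulNr. rewrite sumrN; ring.
Qed.

Lemma weyl_c_opp n (A : 'M[int]_n) u (h : coroot n) :
  weyl_act_c A u (fun k => - h k) = fun k => - weyl_act_c A u h k.
Proof. elim: u => [//|a u IH]; by rewrite /weyl_act_c /= -/(weyl_act_c A u _) IH sref_c_opp. Qed.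

Lemma sref_c_simple n (A : 'M[int]_n) j : A j j = 2 ->
  sref_c A j (simple_coroot j) = fun k => - simple_coroot j k.
Proof.
move=> Hj; apply: functional_extensionality => k; rewrite /sref_c.
rewrite (eq_bigr (fun i => (i == j)%:Z * A i j)) // sum_delta Hj /simple_coroot; ring.
Qed.

Set Implicit Arguments. Unset Strict Implicit. Unset Printing Implicit Defensive.


Definition sref_r n (A : 'M[int]_n) (j : 'I_n) (c : 'I_n -> int) : 'I_n -> int :=
  fun k => c k - (k == j)%:Z * (\sum_l c l * A j l).
Definition root_act n (A : 'M[int]_n) u c := foldr (sref_r A) c u.
Definition pr n (A : 'M[int]_n) (c g : 'I_n -> int) := \sum_k c k * (\sum_l A l k * g l).

Lemma sum_delta_gen n (m : 'I_n) (c F : 'I_n -> int) s :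
  \sum_k (c k - (k == m)%:Z * s) * F k = \sum_k c k * F k - s * F m.
Proof.
under eq_bigr do rewrite mulrBl -mulrA.
by rewrite sumrB sum_delta.
Qed.

Lemma pr_sref n (A : 'M[int]_n) m c g : A m m = 2 ->
  pr A (sref_r A m c) (sref_c A m g) = pr A c g.
Proof.
move=> Hm; rewrite /pr /sref_r /sref_c.
set s := \sum_l c l * A m l. set t := \sum_i g i * A i m.
have inner : forall k, \sum_l A l k * (g l - (l == m)%:Z * t) = \sum_l A l k * g l - A m k * t.
  move=> k; under eq_bigr do rewrite mulrBr mulrCA.
  by rewrite sumrB sum_delta.
under eq_bigr do rewrite inner.
rewrite sum_delta_gen.
under eq_bigr do rewrite mulrBr mulrA.
rewrite sumrB -mulr_suml -/s.
have -> : \sum_l A l m * g l = t by apply: eq_bigr => l _; rewrite mulrC.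
rewrite Hm; ring.
Qed.

Lemma root_d n (A : 'M[int]_n) (d : 'I_n -> int)
  (hsym : forall i j, d i * A i j = d j * A j i) u j k :
  d k * root_act A u (simple_coroot j) k = d j * weyl_act_c A u (simple_coroot j) k.
Proof.
elim: u k => [|m u IH] k.
  rewrite /root_act /weyl_act_c /= /simple_coroot.
  by case: eqP => [->|]; rewrite ?mulr1 ?mulr0.
rewrite /root_act /weyl_act_c /= /sref_r /sref_c -/(root_act A u _) -/(weyl_act_c A u _).
set c := root_act A u _. set g := weyl_act_c A u _.
have IH' : forall k, d k * c k = d j * g k by exact: IH.
case: (eqVneq k m) => [->|Hkm]; last first.
  by rewrite !mul0r !subr0 IH'.
rewrite !mul1r !mulrBr IH'; congr (_ - _).
rewrite !mulr_sumr; apply: eq_bigr => l _.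
transitivity (c l * (d m * A m l)); first ring.
rewrite hsym.
transitivity ((d l * c l) * A l m); first ring.
rewrite IH'; ring.
Qed.

Lemma root_pr n (A : 'M[int]_n) (hdiag : forall i, A i i = 2) u j :
  pr A (root_act A u (simple_coroot j)) (weyl_act_c A u (simple_coroot j)) = 2.
Proof.
elim: u => [|m u IH].
  rewrite /pr /root_act /weyl_act_c /= /simple_coroot.
  under eq_bigr do under eq_bigr do rewrite mulrC.
  under eq_bigr do rewrite sum_delta.
  by rewrite sum_delta hdiag.
by rewrite /root_act /weyl_act_c /= pr_sref.
Qed.


Lemma pr_ge2 n (A : 'M[int]_n) (d : 'I_n -> int) (hdiag : forall i, A i i = 2)
  (hd : forall i, 0 < d i)
  (hsym : forall i j, d i * A i j = d j * A j i)
  (hpd : forall x : 'I_n -> rat, (exists i, x i != 0) ->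
          0 < \sum_i \sum_j x i * (d i * A i j)%:~R * x j)
  (dj : int) (hdj : 0 < dj) (X x : 'I_n -> int)
  (hX : forall k, d k * X k = dj * x k) (hx : exists a, x a != 0) :
  2 <= pr A X x.
Proof.
pose M k l := X k * (A l k * x l).
have hM : forall k l, M k l = M l k.
  move=> k l; apply: (mulfI (x := d k * d l)).
    by rewrite mulf_neq0 // lt0r_neq0.
  rewrite /M.
  transitivity ((d k * X k) * x l * (d l * A l k)); first ring.
  rewrite hX hsym.
  transitivity ((d l * X l) * x k * (d k * A k l)); last ring.
  rewrite hX; ring.
pose Lt (k l : 'I_n) := if (l < k)%N then M k l else 0.
have hpt : forall k l, M k l = Lt k l + (if k == l then M k l else 0) + Lt l k.
  move=> k l; rewrite /Lt; case: (ltngtP l k) => H.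
  - have -> : (k == l) = false by apply/negbTE; rewrite -val_eqE /= gtn_eqF.
    by rewrite addr0 addr0.
  - have -> : (k == l) = false by apply/negbTE; rewrite -val_eqE /= ltn_eqF.
    by rewrite hM !add0r.
  - have -> : k = l by apply: val_inj.
    by rewrite eqxx add0r addr0.
have hsplit : pr A X x = 2 * (\sum_k \sum_l Lt k l + \sum_k X k * x k).
  have -> : pr A X x = \sum_k \sum_l M k l.
    by apply: eq_bigr => k _; rewrite mulr_sumr.
  under eq_bigr do under eq_bigr do rewrite hpt.
  under eq_bigr do rewrite !big_split /=.
  rewrite !big_split /=.
  rewrite [X in _ + _ + X]exchange_big /=.
  have -> : \sum_k \sum_l (if k == l then M k l else 0) = \sum_k X k * x k *+ 2.
    apply: eq_bigr => k _.
    rewrite (bigD1 k) //= eqxx big1 ?addr0; last first.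
      by move=> l /negbTE; rewrite eq_sym => ->.
    by rewrite /M hdiag; ring.
  rewrite sumrMnl; ring.
have hpos : 0 < pr A X x.
  pose y k : rat := (x k)%:~R / (d k)%:~R.
  have dne : forall k, ((d k)%:~R : rat) != 0.
    by move=> k; rewrite intr_eq0 lt0r_neq0.
  have hy : exists i, y i != 0.
    case: hx => a Ha; exists a; rewrite /y mulf_neq0 ?invr_eq0 ?intr_eq0 //.
    exact: lt0r_neq0.
  have Hq := hpd y hy.
  rewrite -(ltr0z rat).
  have -> : ((pr A X x)%:~R : rat) = dj%:~R * \sum_i \sum_j y i * (d i * A i j)%:~R * y j.
    rewrite /pr rmorph_sum [X in _ * X]exchange_big mulr_sumr /=.
    apply: eq_bigr => k _.
    rewrite rmorphM rmorph_sum !mulr_sumr.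
    apply: eq_bigr => l _.
    have eX : ((X k)%:~R : rat) = dj%:~R * y k.
      apply: (mulfI (dne k)).
      rewrite -intrM hX intrM /y; field; exact: dne.
    have ex : ((x l)%:~R : rat) = (d l)%:~R * y l.
      rewrite /y; field; exact: dne.
    rewrite !rmorphM /= eX ex; ring.
  rewrite pmulr_rgt0 // ltr0z //.
rewrite hsplit in hpos *; lia.
Qed.


Lemma pr_lin n (A : 'M[int]_n) (c g P R p q : 'I_n -> int) :
  (forall k, c k = P k - R k) -> (forall k, g k = p k - q k) ->
  pr A c g = pr A P p - pr A P q - pr A R p + pr A R q.
Proof.
move=> Hc Hg; rewrite /pr.
have e : forall k, \sum_l A l k * g l = \sum_l A l k * p l - \sum_l A l k * q l.
  by move=> k; rewrite -sumrB; apply: eq_bigr => l _; rewrite Hg mulrBr.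
under eq_bigr do rewrite e Hc mulrBl !mulrBr.
rewrite !sumrB; ring.
Qed.

Lemma sign_lemma n (A : 'M[int]_n) (hA : simple_finite_cartan A) u j :
  (forall k, 0 <= weyl_act_c A u (simple_coroot j) k) \/
  (forall k, weyl_act_c A u (simple_coroot j) k <= 0).
Proof.
case: hA => _ [hdiag [hoff [_ [[d [hd [hsym hpd]]] _]]]].
set g := weyl_act_c A u (simple_coroot j).
set c := root_act A u (simple_coroot j).
have hcg : forall k, d k * c k = d j * g k by move=> k; exact: root_d.
have hpr : pr A c g = 2 by exact: root_pr.
case: (boolP [forall k, 0 <= g k]) => [/forallP H|]; first by left.
rewrite negb_forall => /existsP [a Ha].
case: (boolP [forall k, g k <= 0]) => [/forallP H|]; first by right.
rewrite negb_forall => /existsP [b Hb].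
exfalso.
rewrite -ltNge in Ha. rewrite -ltNge in Hb.
pose p k := if 0 <= g k then g k else 0.
pose q k := if 0 <= g k then 0 else - g k.
pose P k := if 0 <= g k then c k else 0.
pose R k := if 0 <= g k then 0 else - c k.
have sgn : forall k, (0 <= c k) = (0 <= g k).
  move=> k; by rewrite -(pmulr_rge0 _ (hd k)) hcg pmulr_rge0.
have hq0 : forall k, 0 <= q k.
  move=> k; rewrite /q; case: ifP => // /negbT; rewrite -ltNge oppr_ge0; exact: ltW.
have hp0 : forall k, 0 <= p k by move=> k; rewrite /p; case: ifP.
have hP0 : forall k, 0 <= P k by move=> k; rewrite /P; case: ifP => //; rewrite sgn.
have hR0 : forall k, 0 <= R k.
  move=> k; rewrite /R; case: ifP => // /negbT; rewrite -sgn -ltNge oppr_ge0; exact: ltW.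
have e := @pr_lin n A c g P R p q.
rewrite hpr in e.
have h1 : pr A P q <= 0.
  apply: sumr_le0 => k _; rewrite /P; case: ifP => Hk; last by rewrite mul0r.
  apply: mulr_ge0_le0; first by rewrite sgn.
  apply: sumr_le0 => l _.
  case: (eqVneq l k) => [->|Hlk]; first by rewrite /q Hk mulr0.
  apply: mulr_le0_ge0 => //; exact: hoff.
have h2 : pr A R p <= 0.
  apply: sumr_le0 => k _; rewrite /R; case: ifP => Hk; first by rewrite mul0r.
  apply: mulr_ge0_le0.
    by move/negbT: Hk; rewrite -sgn -ltNge oppr_ge0 => /ltW.
  apply: sumr_le0 => l _.
  case: (eqVneq l k) => [->|Hlk]; first by rewrite /p Hk mulr0.
  apply: mulr_le0_ge0 => //; exact: hoff.
have h3 : 2 <= pr A P p.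
  apply: (pr_ge2 hdiag hd hsym hpd (hd j)).
    by move=> k; rewrite /P /p; case: ifP => _; rewrite ?mulr0 ?hcg.
  exists b; rewrite /p ltW // lt0r_neq0 //.
have h4 : 2 <= pr A R q.
  apply: (pr_ge2 hdiag hd hsym hpd (hd j)).
    by move=> k; rewrite /R /q; case: ifP => _; rewrite ?mulr0 ?mulrN ?hcg.
  exists a; rewrite /q leNgt Ha /= oppr_eq0 ltr0_neq0 //.
have : 2 = pr A P p - pr A P q - pr A R p + pr A R q.
  apply: e => k; rewrite /P /R /p /q; case: ifP => _; by rewrite ?subr0 ?sub0r ?opprK.
lia.
Qed.

Unset Implicit Arguments. Set Strict Implicit. Set Printing Implicit Defensive.


Lemma min_step (a b x : int) : (b = 0 \/ b = 1) ->
  (Num.min a (a - b) <= Num.min (a + x) (a - b - x) \/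
   Num.min (- a) (- a + b) <= Num.min (- a - x) (- a + b + x)) ->
  (b = 0 -> x = 0) /\ (b = 1 -> x = 0 \/ x = -1).
Proof. move=> Hb; rewrite !le_min !ge_min; lia. Qed.

Theorem lemma5p2 (n : nat) (A : 'M[int]_n) (hA : simple_finite_cartan A)
  (lam : weight n) (i : 'I_n) (w : seq 'I_n)
  (hlam : dominant lam)
  (hdom : dominant (fun k => lam k - weyl_inv_act_w A w (fund_weight i) k)) :
  (forall mu1 mu2 : weight n,
     in_P2 (fun k => 2 * lam k) mu1 mu2 ->
     preceq A lam lam mu1 mu2 -> simeq A mu1 mu2 lam lam) /\
  (forall mu1 mu2 : weight n,
     in_P2 (fun k => 2 * lam k - weyl_inv_act_w A w (fund_weight i) k) mu1 mu2 ->
     preceq A lam (fun k => lam k - weyl_inv_act_w A w (fund_weight i) k) mu1 mu2 ->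
     simeq A mu1 mu2 lam (fun k => lam k - weyl_inv_act_w A w (fund_weight i) k)).
Proof.
have hdiag : forall j, A j j = 2 by case: hA => _ [].
split.
  move=> mu1 mu2 [_ [_ Hs]] Hp h Hh.
  have Hsum := @pairing_sum n mu1 mu2 (fun k => 2 * lam k) h Hs.
  have Hl : pairing (fun k => 2 * lam k) h = pairing lam h + pairing lam h.
    by symmetry; apply: pairing_sum => k; ring.
  have := Hp h Hh. rewrite Hl in Hsum.
  move: Hsum; set m1 := pairing mu1 h; set m2 := pairing mu2 h; set L := pairing lam h.
  move=> Hsum; rewrite minxx le_min => /andP [H1 H2].
  have -> : m1 = L by lia.
  have -> : m2 = L by lia.
  by rewrite minxx.
move=> mu1 mu2 [_ [_ Hs]] Hp.
set beta := weyl_inv_act_w A w (fund_weight i).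
set nu := fun k => lam k - beta k.
pose delta := fun k => mu1 k - lam k.
pose delta' := weyl_act_w A w delta.
have hcan_c : forall s (x : coroot n), foldr (sref_c A) (foldr (sref_c A) x s) (rev s) = x.
  apply: foldr_cancel => j y; exact: sref_c_inv.
have hcan_w : forall s (x : weight n), foldr (sref_w A) (foldr (sref_w A) x s) (rev s) = x.
  apply: foldr_cancel => j y; exact: sref_w_inv.
have key : forall j, ((j != i) -> delta' j = 0) /\ (j == i -> delta' j = 0 \/ delta' j = -1).
  move=> j.
  set g := weyl_act_c A (rev w) (simple_coroot j).
  have ed : delta' j = pairing delta g by rewrite -pairing_simple weyl_adj.
  have eb : pairing beta g = (j == i)%:Z.
    rewrite /beta /weyl_inv_act_w weyl_adj revK /g /weyl_act_c.
    have := hcan_c (rev w) (simple_coroot j); rewrite revK => ->.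
    by rewrite pairing_simple /fund_weight.
  have Hg : forall h, is_pos_coroot A h ->
      Num.min (pairing lam h) (pairing lam h - pairing beta h) <=
      Num.min (pairing lam h + pairing delta h) (pairing lam h - pairing beta h - pairing delta h).
    move=> h Hh; have := Hp h Hh.
    have -> : pairing nu h = pairing lam h - pairing beta h.
      apply/eqP; rewrite eq_sym subr_eq eq_sym; apply/eqP; apply: pairing_sum => k.
      by rewrite /nu subrK.
    have -> : pairing mu1 h = pairing lam h + pairing delta h.
      by symmetry; apply: pairing_sum => k; rewrite /delta addrC subrK.
    have -> : pairing mu2 h = pairing lam h - pairing beta h - pairing delta h.
      apply/eqP; rewrite eq_sym subr_eq subr_eq; apply/eqP.
      rewrite -addrA; apply/esym.
      rewrite (@pairing_sum n delta beta (fun k => delta k + beta k) h) //.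
      apply: pairing_sum => k; rewrite /delta.
      have := Hs k; rewrite -/beta => Hk.
      have : mu2 k = 2 * lam k - beta k - mu1 k by rewrite -Hk; ring.
      move=> ->; ring.
    done.
  have Hb : (j == i)%:Z = 0 \/ (j == i)%:Z = 1 by case: (j == i); [right|left].
  have M := @min_step (pairing lam g) ((j == i)%:Z) (pairing delta g) Hb.
  rewrite ed.
  suff: (Num.min (pairing lam g) (pairing lam g - (j == i)%:Z) <=
         Num.min (pairing lam g + pairing delta g) (pairing lam g - (j == i)%:Z - pairing delta g) \/
         Num.min (- pairing lam g) (- pairing lam g + (j == i)%:Z) <=
         Num.min (- pairing lam g - pairing delta g) (- pairing lam g + (j == i)%:Z + pairing delta g)).
    move=> /M [H1 H2]; split => [/negbTE Hj|Hj]; [apply: H1; rewrite Hj // | apply: H2; rewrite Hj //].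
  case: (sign_lemma hA (rev w) j) => Hsg.
    have Hpg : is_pos_coroot A g by split; [exists (rev w), j => k | ].
    by left; have := Hg g Hpg; rewrite eb.
  have Hpos : is_pos_coroot A (fun k => - g k).
    split; last by move=> k; rewrite oppr_ge0.
    exists (rcons (rev w) j), j => k.
    by rewrite /weyl_act_c foldr_rcons sref_c_simple // -/(weyl_act_c A (rev w) _) weyl_c_opp.
  right; have := Hg _ Hpos; rewrite !pairing_oppc eb.
  congr (Num.min _ _ <= Num.min _ _); ring.
have hdelta : delta = weyl_act_w A (rev w) delta'.
  by rewrite /delta' /weyl_act_w hcan_w.
have [Hz|Hm] : delta' i = 0 \/ delta' i = -1 by apply: (key i).2; rewrite eqxx.
  have E : delta' = fun _ => 0.
    apply: functional_extensionality => j; case: (eqVneq j i) => [->|Hj] //.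
    exact: (key j).1.
  rewrite E weyl_w_zero in hdelta.
  move=> h Hh.
  have -> : pairing mu1 h = pairing lam h.
    apply: pairing_ext => k; have := congr1 (fun f => f k) hdelta; rewrite /delta /=.
    by move/eqP; rewrite subr_eq0 => /eqP.
  have -> : pairing mu2 h = pairing nu h.
    apply: pairing_ext => k; have := congr1 (fun f => f k) hdelta; rewrite /delta /=.
    move/eqP; rewrite subr_eq0 => /eqP H1.
    have := Hs k; rewrite H1 /nu -/beta => Hk.
    have -> : mu2 k = 2 * lam k - beta k - lam k by rewrite -Hk; ring.
    ring.
  done.
have E : delta' = fun k => - fund_weight i k.
  apply: functional_extensionality => j; case: (eqVneq j i) => [->|Hj].
    by rewrite Hm /fund_weight eqxx.
  by rewrite (key j).1 // /fund_weight (negbTE Hj) oppr0.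
rewrite E weyl_w_opp in hdelta.
move=> h Hh.
have Hd : forall k, mu1 k = nu k.
  move=> k; have := congr1 (fun f => f k) hdelta; rewrite /delta /nu /=.
  rewrite -/(weyl_inv_act_w A w (fund_weight i)) -/beta => H1.
  have -> : mu1 k = mu1 k - lam k + lam k by rewrite subrK.
  rewrite H1; ring.
have -> : pairing mu1 h = pairing nu h by apply: pairing_ext.
have -> : pairing mu2 h = pairing lam h.
  apply: pairing_ext => k; have := Hs k; rewrite Hd /nu -/beta => Hk.
  have -> : mu2 k = 2 * lam k - beta k - (lam k - beta k) by rewrite -Hk; ring.
  ring.
by rewrite minC.
Qed.
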